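(* Let $(\mathcal Q,d)$ be a Hadamard space, $Y$ a $\mathcal Q$-valued random variable, $o\in\mathcal Q$, and $m\in\arg\min_{q\in\mathcal Q}\mathbb E[d(Y,q)-d(Y,o)]$. Let $\gamma:I\to\mathcal Q$ be a unit-speed geodesic on a closed interval $I$ with $0\in I$, $\gamma(0)=m$, and $\mathbb P(Y\in\gamma(I))=1$. Let $q\in\mathcal Q$. Then the projection $p:=\arg\min_{z\in\gamma(I)}d(q,z)$ exists and is unique; assume (after possibly reversing the orientation of $\gamma$) that $\gamma^{-1}(p)\ge0$. Define $a_-:=\mathbb P(\gamma^{-1}(Y)<0)$, $a_0:=\mathbb P(Y=m)$, $a_+:=\mathbb P(\gamma^{-1}(Y)>0)$. Then $$\mathbb E[d(Y,q)-d(Y,m)]\ \ge\ d(q,m)\,a_0+d(p,m)\,(a_--a_+)+\mathbb E\Big[\big(d(q,p)+d(p,m)-d(Y,m)\big)\mathbf 1_{(0,\,d(q,p)+d(p,m)]}\big(\gamma^{-1}(Y)\big)\Big].$$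
   Context: A Hadamard space is a complete metric space $(\mathcal Q,d)$ such that for all $y_0,y_1$ there is $m$ with $\frac12 d(y_0,q)^2+\frac12 d(y_1,q)^2-\frac14 d(y_0,y_1)^2\ge d(q,m)^2$ for all $q$. A unit-speed geodesic is a map $\gamma:I\to\mathcal Q$ on an interval with $d(\gamma(s),\gamma(t))=|s-t|$; it is injective, so $\gamma^{-1}$ is defined on its image. *)

(* Defs.v *)
From HB Require Import structures.
From mathcomp Require Import all_boot all_order all_algebra.
From mathcomp Require Import all_classical all_reals all_analysis.
Set Implicit Arguments. Unset Strict Implicit. Unset Printing Implicit Defensive.
Import Order.TTheory GRing.Theory Num.Theory.
Local Open Scope classical_set_scope.
Local Open Scope ring_scope.

Definition is_metric {R : realType} {Q : Type} (d : Q -> Q -> R) : Prop :=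
  [/\ forall x y, d x y = 0 <-> x = y,
      forall x y, d x y = d y x &
      forall x y z, d x z <= d x y + d y z].

Definition metric_complete {R : realType} {Q : Type} (d : Q -> Q -> R) : Prop :=
  forall u : nat -> Q,
    (forall e : R, 0 < e -> exists N : nat, forall n k : nat,
        (N <= n)%N -> (N <= k)%N -> d (u n) (u k) < e) ->
    exists x : Q, forall e : R, 0 < e -> exists N : nat, forall n : nat,
        (N <= n)%N -> d (u n) x < e.

(* Hadamard space: complete metric space with the midpoint (CAT(0)) inequality. *)
Definition hadamard {R : realType} {Q : Type} (d : Q -> Q -> R) : Prop :=
  [/\ is_metric d, metric_complete d &
      forall y0 y1 : Q, exists m : Q, forall q : Q,
        2^-1 * d y0 q ^+ 2 + 2^-1 * d y1 q ^+ 2 - 4^-1 * d y0 y1 ^+ 2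
          >= d q m ^+ 2].

Definition metric_open {R : realType} {Q : Type} (d : Q -> Q -> R) (U : set Q) : Prop :=
  forall x, U x -> exists e : R, 0 < e /\ forall y, d x y < e -> U y.

Definition metric_borel {R : realType} {Q : Type} (d : Q -> Q -> R) : set (set Q) :=
  <<s [set U | metric_open d U] >>.

Definition borel_measurable_map {R : realType} {dO : measure_display}
  {Omega : measurableType dO} {Q : Type} (d : Q -> Q -> R) (Y : Omega -> Q) : Prop :=
  forall B, metric_borel d B -> measurable (Y @^-1` B).

Definition unit_speed_geodesic {R : realType} {Q : Type} (d : Q -> Q -> R)
  (I : set R) (g : R -> Q) : Prop :=
  forall s t, I s -> I t -> d (g s) (g t) = `|s - t|.

(* The set of points y = g t with t in I and A t, i.e. {y in g(I) | g^{-1}(y) in A}. *)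
Definition geod_inv_in {R : realType} {Q : Type} (I : set R) (g : R -> Q)
  (A : set R) : set Q := g @` (I `&` A).

Definition is_projection {R : realType} {Q : Type} (d : Q -> Q -> R)
  (I : set R) (g : R -> Q) (q p : Q) : Prop :=
  (g @` I) p /\ forall z, (g @` I) z -> d q p <= d q z.

(* Main.v *)
Require Import Defs.
From HB Require Import structures.
From mathcomp Require Import all_boot all_order all_algebra.
From mathcomp Require Import all_classical all_reals all_analysis.
From mathcomp Require Import ring lra measurable_realfun.
Import Order.TTheory GRing.Theory Num.Theory numFieldNormedType.Exports.
Local Open Scope classical_set_scope.
Local Open Scope ring_scope.
Lemma met_dxx {R : realType} {Q : Type} {d : Q -> Q -> R} :
  is_metric d -> forall x, d x x = 0.
Proof. by case=> H _ _ x; apply/H. Qed.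

Lemma met_ge0 {R : realType} {Q : Type} {d : Q -> Q -> R} :
  is_metric d -> forall x y, 0 <= d x y.
Proof.
move=> hd x y; have := met_dxx hd x; case: hd => _ hs ht.
have := ht x y x; rewrite (hs y x) => + h0; rewrite h0; lra.
Qed.

Lemma met_sym {R : realType} {Q : Type} {d : Q -> Q -> R} :
  is_metric d -> forall x y, d x y = d y x.
Proof. by case. Qed.

Lemma met_tri {R : realType} {Q : Type} {d : Q -> Q -> R} :
  is_metric d -> forall x y z, d x z <= d x y + d y z.
Proof. by case. Qed.

Lemma met_eq {R : realType} {Q : Type} {d : Q -> Q -> R} :
  is_metric d -> forall x y, d x y = 0 -> x = y.
Proof. by case=> H _ _ x y /H. Qed.

Lemma geod_mid {R : realType} {Q : Type} (d : Q -> Q -> R) (I : set R) g s t :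
  hadamard d -> is_interval I -> unit_speed_geodesic d I g -> I s -> I t ->
  forall z, d z (g ((s+t)/2)) ^+ 2 <=
     2^-1 * d z (g s) ^+ 2 + 2^-1 * d z (g t) ^+ 2 - 4^-1 * (s - t) ^+ 2.
Proof.
move=> [hm _ hmid] hI hg Is It.
have Iu : I ((s+t)/2).
  have [st|ts] := leP s t.
    by apply: (hI s t) => //; apply/andP; split; lra.
  by apply: (hI t s) => //; apply/andP; split; lra.
have [m' Hm] := hmid (g s) (g t).
have e : m' = g ((s+t)/2).
  have := Hm (g ((s+t)/2)).
  rewrite hg // hg // hg // !real_normK ?num_real // => h.
  have h0 : d (g ((s + t) / 2)) m' ^+ 2 <= 0.
    apply: (le_trans h); rewrite le_eqVlt; apply/orP; left; apply/eqP.
    by field.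
  have := met_ge0 hm (g ((s + t) / 2)) m'.
  move=> h1; have hx : d (g ((s + t) / 2)) m' = 0.
    by apply/eqP; rewrite -sqrf_eq0 eq_le h0 sqr_ge0.
  by apply/esym/(met_eq hm).
move=> z; have := Hm z; rewrite -e (met_sym hm z (g s)) (met_sym hm z (g t)) hg //.
by rewrite real_normK ?num_real.
Qed.
Lemma small_pow2 {R : realType} (c : R) : 0 < c -> exists n : nat, (2 ^+ n)^-1 < c.
Proof.
move=> c0; have ci : 0 < c^-1 by rewrite invr_gt0.
have hb := @archi_boundP R c^-1 (ltW ci).
exists (Num.bound c^-1); rewrite -(invrK c) ltf_pV2 ?posrE ?exprn_gt0 ?invr_gt0 //.
apply: (lt_le_trans hb); rewrite -natrX ler_nat; apply: ltnW.
by rewrite !invrK; exact: ltn_expl.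
Qed.

Lemma proj_ineq {R : realType} {Q : Type} (d : Q -> Q -> R) (I : set R) g q a b :
  hadamard d -> is_interval I -> unit_speed_geodesic d I g -> I a -> I b ->
  (forall t, I t -> d q (g a) <= d q (g t)) ->
  d q (g a) ^+ 2 + (b - a) ^+ 2 <= d q (g b) ^+ 2.
Proof.
move=> hH hI hg Ia Ib hmin.
have hm : is_metric d by case: hH.
set D := b - a.
pose f x := d q (g x) ^+ 2.
pose e (n : nat) : R := (2 ^+ n)^-1.
have e0 n : 0 < e n by rewrite /e invr_gt0 exprn_gt0.
have e1 n : e n <= 1 by rewrite /e invf_le1 ?exprn_gt0 //; apply: exprn_ege1; lra.
have eS n : e n.+1 = e n / 2 by rewrite /e exprSr invfM.
have Ix n : I (a + e n * D).
  have := e0 n; have := e1 n => h1 h0.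
  have [ab|ba] := leP a b.
    apply: (hI a b) => //; apply/andP; split; rewrite /D; nra.
  apply: (hI b a) => //; apply/andP; split; rewrite /D; nra.
have H n : f (a + e n * D) <= (1 - e n) * f a + e n * (f b - D ^+ 2) + e n ^+ 2 * D ^+ 2.
  elim: n => [|n IH].
    rewrite /e expr0 invr1 mul1r /D; have -> : a + (b - a) = b by ring.
    rewrite /f; lra.
  have hmid := geod_mid d I g a (a + e n * D) hH hI hg Ia (Ix n) q.
  have -> : a + e n.+1 * D = (a + (a + e n * D)) / 2 by rewrite eS; field.
  apply: (le_trans hmid); rewrite -/(f a) -/(f _) eS.
  have -> : (a - (a + e n * D)) ^+ 2 = e n ^+ 2 * D ^+ 2 by ring.
  move: IH; set F := f (a + e n * D); set E := e n.
  move=> IH; have -> : (E / 2) ^+ 2 * D ^+ 2 = 4^-1 * (E ^+ 2 * D ^+ 2) by field.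
  set P := E ^+ 2 * D ^+ 2.
  have -> : (1 - E / 2) * f a + E / 2 * (f b - D ^+ 2) =
    2^-1 * f a + 2^-1 * ((1 - E) * f a + E * (f b - D ^+ 2)) by field.
  move: IH; set G := (1 - E) * f a + E * (f b - D ^+ 2); move=> IH.
  move: IH; rewrite -/P; move: (f a) F G P => x1 x2 x3 x4 IH; lra.
rewrite -subr_ge0; apply/negP => /negP; rewrite -ltNge => hX.
set X := _ - _ in hX.
have hD : 0 <= D ^+ 2 by apply: sqr_ge0.
have [k hn] : exists n, e n * D ^+ 2 < - X.
  have [D0|Dp] := eqVneq (D ^+ 2) 0.
    by exists 0%N; rewrite D0 mulr0; lra.
  have Dp' : 0 < D ^+ 2 by rewrite lt_neqAle eq_sym Dp hD.
  have nX : 0 < - X by rewrite oppr_gt0.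
  have [n hn] := small_pow2 _ (divr_gt0 nX Dp').
  by exists n; rewrite -ltr_pdivlMr.
have := H k; have := hmin _ (Ix k).
rewrite -(ler_pXn2r (n:=2)) ?nnegrE ?(met_ge0 hm) // -/(f a) -/(f _).
move: hn; rewrite /X -/(f a) -/(f b) -/D; set E := e k; have := e0 k; rewrite -/E.
move=> E0 hn h1 h2.
have h3 : 0 <= E * (f b - f a - D ^+ 2 + E * D ^+ 2) by nra.
have : 0 <= f b - f a - D ^+ 2 + E * D ^+ 2.
  by rewrite -(pmulr_rge0 _ E0).
lra.
Qed.
Lemma lip_within {R : realType} (C : set R) (phi : R -> R) :
  (forall s t, C s -> C t -> `|phi s - phi t| <= `|s - t|) ->
  {within C, continuous phi}.
Proof.
move=> hL; apply/subspace_continuousP => x Cx.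
apply/cvgrPdist_lt => eps eps0.
rewrite /= /within /=. 
apply/nbhs_ballP; exists eps => //= s; rewrite /ball /= => hs Cs.
by apply: le_lt_trans (hL _ _ Cx Cs) hs.
Qed.

Lemma exists_min {R : realType} (C : set R) (phi : R -> R) t0 :
  closed C -> C t0 ->
  (forall s t, C s -> C t -> `|phi s - phi t| <= `|s - t|) ->
  (forall s t, C s -> C t -> `|s - t| - phi t <= phi s) ->
  exists2 c, C c & forall s, C s -> phi c <= phi s.
Proof.
move=> cC Ct0 hL hco.
pose r := 2 * `|phi t0| + 1.
pose A := `[t0 - r, t0 + r] `&` C.
have cA : compact A by apply: compact_closedI => //; exact: segment_compact.
have r0 : 0 <= r by rewrite /r; have := normr_ge0 (phi t0); lra.
have At0 : A t0 by split => //=; rewrite in_itv /=; apply/andP; split; lra.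
have [c /set_mem Ac hc] := compact_EVT_min (ex_intro _ t0 At0) cA
  (continuous_subspaceW (@subIsetr _ _ _) (lip_within C phi hL)).
exists c; first by case: Ac.
move=> s Cs; have [hs|hs] := leP `|s - t0| r.
  apply: hc; apply/mem_set; split => //=; rewrite in_itv /=.
  move: hs; rewrite ler_norml => /andP[h1 h2]; apply/andP; split; lra.
have := hco _ _ Cs Ct0; have := hc t0 (mem_set At0).
have := ler_norm (phi t0); rewrite /r in hs; lra.
Qed.

Lemma rev_tri {R : realType} {Q : Type} {d : Q -> Q -> R} :
  is_metric d -> forall x y z, `|d z x - d z y| <= d x y.
Proof.
move=> hm x y z; rewrite ler_norml; have := met_tri hm z x y; have := met_tri hm z y x.
rewrite (met_sym hm y x); move=> h1 h2; apply/andP; split; lra.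
Qed.

Lemma geod_min {R : realType} {Q : Type} (d : Q -> Q -> R) (I C : set R) g x :
  is_metric d -> unit_speed_geodesic d I g -> C `<=` I -> closed C ->
  forall t0, C t0 -> exists2 c, C c & forall s, C s -> d x (g c) <= d x (g s).
Proof.
move=> hm hg CI cC t0 Ct0; apply: (exists_min C (fun t => d x (g t)) t0 cC Ct0).
  move=> s t Cs Ct; rewrite -(hg s t); [exact: rev_tri| exact: CI| exact: CI].
move=> s t Cs Ct; have := hg s t (CI _ Cs) (CI _ Ct).
have := met_tri hm (g s) x (g t); rewrite (met_sym hm (g s) x); lra.
Qed.

Lemma img_closed {R : realType} {Q : Type} (d : Q -> Q -> R) (I C : set R) g :
  is_metric d -> unit_speed_geodesic d I g -> C `<=` I -> closed C ->
  metric_open d (~` (g @` C)).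
Proof.
move=> hm hg CI cC x hx.
have [[t0 Ct0]|nC] := pselect (exists t, C t); last first.
  exists 1; split => // y _ [t Ct _]; apply: nC; by exists t.
have [c Cc hc] := geod_min d I C g x hm hg CI cC t0 Ct0.
have dpos : 0 < d x (g c).
  rewrite lt_neqAle met_ge0 // andbT; apply/eqP => h0.
  by apply: hx; exists c => //; apply/esym/(met_eq hm); rewrite h0.
exists (d x (g c)); split => // y hy [s Cs hs]; subst y.
by have := hc _ Cs; lra.
Qed.

Lemma set1_open {R : realType} {Q : Type} (d : Q -> Q -> R) m :
  is_metric d -> metric_open d (~` [set m]).
Proof.
move=> hm x hx; exists (d x m); split.
  rewrite lt_neqAle met_ge0 // andbT; apply/eqP => h0.
  by apply: hx; apply: (met_eq hm).
move=> y hy /= ym; subst y; lra.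
Qed.

Lemma gt_open {R : realType} {Q : Type} (d : Q -> Q -> R) z (x : R) :
  is_metric d -> metric_open d [set y | x < d y z].
Proof.
move=> hm y /= hy; exists (d y z - x); split; first lra.
move=> y' hy'; have := met_tri hm y y' z; have := met_tri hm y' y z.
rewrite (met_sym hm y' y); lra.
Qed.

Lemma borel_closed {R : realType} {Q : Type} (d : Q -> Q -> R) (B : set Q) :
  metric_open d (~` B) -> metric_borel d B.
Proof.
move=> hB; rewrite -(setCK B) -setTD; apply: sigma_algebraCD; exact: sub_sigma_algebra.
Qed.

Lemma meas_dist {R : realType} {Q : Type} (d : Q -> Q -> R) {dO : measure_display}
  {Omega : measurableType dO} (Y : Omega -> Q) z :
  is_metric d -> borel_measurable_map d Y ->
  measurable_fun setT (fun w => d (Y w) z).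
Proof.
move=> hm hY mD; apply: (measurability _ (RGenOInfty.measurableE R)) => //.
move=> /= _ [_ [x ->] <-]; apply: measurableI => //.
have -> : (fun w => d (Y w) z) @^-1` `]x, +oo[%classic = Y @^-1` [set y | x < d y z].
  by apply/seteqP; split => w /=; rewrite in_itv /= andbT.
apply: hY; apply: sub_sigma_algebra; exact: gt_open.
Qed.

Lemma geod_inj {R : realType} {Q : Type} {d : Q -> Q -> R} {I : set R} {g : R -> Q} {s t : R} :
  is_metric d -> unit_speed_geodesic d I g -> I s -> I t -> g s = g t -> s = t.
Proof.
move=> hm hg Is It e; have := hg s t Is It; rewrite e met_dxx // => /esym /eqP.
by rewrite normr_eq0 subr_eq0 => /eqP.
Qed.

Lemma img_mem {R : realType} {Q : Type} (d : Q -> Q -> R) (I A : set R) g t :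
  is_metric d -> unit_speed_geodesic d I g -> I t ->
  (g @` (I `&` A)) (g t) <-> A t.
Proof.
move=> hm hg It; split.
  by move=> [s [Is As] e]; rewrite -(geod_inj hm hg Is It e).
by move=> At; exists t.
Qed.

Lemma img_split {R : realType} {Q : Type} (d : Q -> Q -> R) (I A B : set R) g m :
  is_metric d -> unit_speed_geodesic d I g -> I 0 -> g 0 = m ->
  (forall t, A t <-> B t /\ t <> 0) ->
  g @` (I `&` A) = g @` (I `&` B) `\` [set m].
Proof.
move=> hm hg I0 g0 hAB; apply/seteqP; split.
  move=> _ [t [It At] <-]; have [Bt t0] := (hAB t).1 At.
  split; first by exists t.
  by move=> /= e; apply: t0; apply: (geod_inj hm hg It I0); rewrite e g0.
move=> _ [[t [It Bt] <-] /= hne]; exists t => //; split => //.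
by apply/hAB; split => // t0; apply: hne; rewrite t0.
Qed.

Lemma proj_exu {R : realType} {Q : Type} (d : Q -> Q -> R) (I : set R) g q :
  hadamard d -> is_interval I -> closed I -> I 0 -> unit_speed_geodesic d I g ->
  exists! p, is_projection d I g q p.
Proof.
move=> hH hI cI I0 hg; have hm : is_metric d by case: hH.
have [c Ic hc] := geod_min d I I g q hm hg (@subset_refl _ I) cI 0 I0.
exists (g c); split.
  by split; [exists c | move=> z [t It <-]; exact: hc].
move=> p' [[b Ib <-] hp'].
have h1 := proj_ineq d I g q c b hH hI hg Ic Ib hc.
have h2 := hp' (g c) (ex_intro2 _ _ c Ic erefl).
have h3 := met_ge0 hm q (g b); have h4 := met_ge0 hm q (g c).
have h5 : (b - c) ^+ 2 <= 0 by nra.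
have : (b - c) ^+ 2 == 0 by rewrite eq_le h5 sqr_ge0.
by rewrite sqrf_eq0 subr_eq0 => /eqP ->.
Qed.

Lemma bounded_by {T : Type} {R : realType} (f : T -> R) (M0 : R) :
  (forall x, `|f x| <= M0) -> [bounded f x | x in setT].
Proof.
move=> hf; exists M0; split; first exact: num_real.
move=> M hM x _ /=; apply: le_trans (hf x) _; exact: ltW.
Qed.

Lemma pointwise {R : realType} (t tp Dq Dp dqm : R) :
  0 <= tp -> Dp <= Dq -> `|t - tp| <= Dq -> (t = 0 -> Dq = dqm) ->
  dqm * (t == 0)%:R + tp * (t < 0)%R%:R - tp * (0 < t)%R%:R +
  (Dp + tp - `|t|) * ((0 < t) && (t <= Dp + tp))%R%:R <= Dq - `|t|.
Proof.
move=> tp0 h1 h2 h3.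
have [t0|t0|t0] := ltgtP t 0; rewrite /= ?mulr0n ?mulr1n ?mulr0 ?mulr1.
- rewrite (ltr0_norm t0).
  move: h2; rewrite ler_norml => /andP[h2 _]; lra.
- rewrite (gtr0_norm t0).
  have [tL|tL] := leP t (Dp + tp); rewrite /= ?mulr0n ?mulr1n ?mulr0 ?mulr1.
    lra.
  move: h2; rewrite ler_norml => /andP[_ h2]; lra.
- subst t; rewrite normr0 h3 //; lra.
Qed.

Lemma norm_mul_indic {T : Type} {R : realType} (A : set T) (x : R) w :
  `|x * \1_A w| <= `|x|.
Proof.
rewrite indicE normrM; case: (w \in A); rewrite /= ?normr1 ?mulr1 // normr0 mulr0.
exact: normr_ge0.
Qed.

Lemma memP_bool {T : Type} (A : set T) (w : T) (b : bool) :
  (A w <-> b) -> (w \in A) = b.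
Proof. by move=> h; apply/idP/idP => [/set_mem/h|/h/mem_set]. Qed.

Theorem mainTheorem14 (R : realType) (Q : Type) (d : Q -> Q -> R)
  (dO : measure_display) (Omega : measurableType dO) (P : probability Omega R)
  (Y : Omega -> Q) (o m : Q) (I : set R) (g : R -> Q) (q : Q) :
  hadamard d ->
  borel_measurable_map d Y ->
  (forall z : Q,
     (\int[P]_w ((d (Y w) m - d (Y w) o)%:E) <=
      \int[P]_w ((d (Y w) z - d (Y w) o)%:E))%E) ->
  is_interval I -> closed I -> I 0 ->
  unit_speed_geodesic d I g -> g 0 = m ->
  P (Y @^-1` (g @` I)) = 1%E ->
  (exists! p : Q, is_projection d I g q p) /\
  (forall (p : Q) (tp : R), is_projection d I g q p -> I tp -> g tp = p ->
   0 <= tp ->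
   let L := d q p + d p m in
   let am := fine (P (Y @^-1` geod_inv_in I g [set t | t < 0])) in
   let a0 := fine (P (Y @^-1` [set m])) in
   let ap := fine (P (Y @^-1` geod_inv_in I g [set t | 0 < t])) in
   (\int[P]_w ((d (Y w) q - d (Y w) m)%:E) >=
    (d q m * a0 + d p m * (am - ap))%:E +
    \int[P]_w (((L - d (Y w) m) *
                 \1_(Y @^-1` geod_inv_in I g `]0, L]) w)%:E))%E).
Proof.
move=> hH hY _ hI cI I0 hg g0 PE.
have hm : is_metric d by case: hH.
split; first exact: proj_exu.
move=> p tp [_ hproj] Itp gtp tp0; cbv zeta.
set L := d q p + d p m.
have dpm : d p m = tp by rewrite -gtp -g0 hg // subr0 ger0_norm.
have hmin : forall t, I t -> d q p <= d q (g t).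
  by move=> t It; apply: hproj; exists t.
have hfar : forall t, I t -> `|t - tp| <= d q (g t).
  move=> t It.
  have := proj_ineq d I g q tp t hH hI hg Itp It (fun s Is => eq_ind _ (fun x => d q x <= d q (g s)) (hmin s Is) _ (esym gtp)).
  rewrite gtp => h.
  rewrite -(ler_pXn2r (n:=2)) ?nnegrE ?normr_ge0 ?(met_ge0 hm) // real_normK ?num_real //.
  have := sqr_ge0 (d q p); lra.
pose E := Y @^-1` (g @` I).
have mE : measurable E.
  by apply: hY; apply: borel_closed; apply: (img_closed d I I g hm hg (@subset_refl _ I) cI).
pose S0 := Y @^-1` [set m].
have mS0 : measurable S0 by apply: hY; apply: borel_closed; exact: set1_open.
pose Sm := Y @^-1` geod_inv_in I g [set t | t < 0].
have mSm : measurable Sm.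
  rewrite /Sm /geod_inv_in (img_split d I [set t | t < 0] [set t | t <= 0] g m hm hg I0 g0).
    apply: measurableD => //; apply: hY; apply: borel_closed.
    apply: (img_closed d I _ g hm hg); first exact: subIsetl.
    apply: closedI => //; exact: closed_le.
  by move=> t /=; split; [move=> h; split; [exact: ltW| move=> e; move: h; rewrite e ltxx]
    | case; rewrite le_eqVlt => /orP[/eqP -> //|//]].
pose Sp := Y @^-1` geod_inv_in I g [set t | 0 < t].
have mSp : measurable Sp.
  rewrite /Sp /geod_inv_in (img_split d I [set t | 0 < t] [set t | 0 <= t] g m hm hg I0 g0).
    apply: measurableD => //; apply: hY; apply: borel_closed.
    apply: (img_closed d I _ g hm hg); first exact: subIsetl.
    apply: closedI => //; exact: closed_ge.
  by move=> t /=; split; [move=> h; split; [exact: ltW| move=> e; move: h; rewrite e ltxx]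
    | case; rewrite le_eqVlt => /orP[/eqP <- //|//]].
pose SS := Y @^-1` geod_inv_in I g `]0, L].
have mSS : measurable SS.
  rewrite /SS /geod_inv_in (img_split d I `]0, L] ([set t | 0 <= t] `&` [set t | t <= L]) g m hm hg I0 g0).
    apply: measurableD => //; apply: hY; apply: borel_closed.
    rewrite setIA; apply: (img_closed d I _ g hm hg).
      by move=> t [[]].
    apply: closedI; first (apply: closedI => //; exact: closed_ge).
    exact: closed_le.
  move=> t /=; rewrite in_itv /=; split.
    by move=> /andP[h1 h2]; split; [split; [exact: ltW|] | move=> e; move: h1; rewrite e ltxx].
  case=> -[h1 h2] h3; apply/andP; split => //; rewrite lt_neqAle h1 andbT eq_sym; apply/eqP; exact: h3.
pose F w := d (Y w) q - d (Y w) m.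
pose f1 w := F w * \1_E w.
pose h w := (L - d (Y w) m) * \1_SS w.
pose k w := d q m * \1_S0 w + d p m * \1_Sm w - d p m * \1_Sp w.
have mdq := meas_dist d Y q hm hY.
have mdm := meas_dist d Y m hm hY.
have mF : measurable_fun setT F by exact: measurable_funB.
have mf1 : measurable_fun setT f1 by apply: measurable_funM => //; exact: measurable_indic.
have mh : measurable_fun setT h.
  by apply: measurable_funM; [apply: measurable_funB => // | exact: measurable_indic].
have mk : measurable_fun setT k.
  apply: measurable_funB; first apply: measurable_funD.
  - by apply: measurable_funM => //; exact: measurable_indic.
  - by apply: measurable_funM => //; exact: measurable_indic.
  - by apply: measurable_funM => //; exact: measurable_indic.
have Pfin : (P setT < +oo)%E by rewrite probability_setT ltry.
have L0 : 0 <= L by rewrite /L dpm; have := met_ge0 hm q p; lra.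
have bF : forall w, `|F w| <= d q m by move=> w; exact: rev_tri.
have bf1 : forall w, `|f1 w| <= d q m by move=> w; exact: le_trans (norm_mul_indic _ _ _) (bF w).
have bh : forall w, `|h w| <= L.
  move=> w; rewrite /h indicE; have [/set_mem [t [It /= tL] eYw]|] := boolP (w \in SS).
    move: tL; rewrite in_itv /= => /andP[t0 tL].
    rewrite mulr1 -eYw -g0 hg // subr0 (gtr0_norm t0) ger0_norm; lra.
  by rewrite mulr0 normr0.
have bk : forall w, `|k w| <= d q m + d p m + d p m.
  move=> w; rewrite /k; apply: (le_trans (ler_normB _ _)).
  apply: lerD; last by apply: le_trans (norm_mul_indic _ _ _) _; rewrite ger0_norm ?(met_ge0 hm).
  apply: (le_trans (ler_normD _ _)).
  by apply: lerD; apply: le_trans (norm_mul_indic _ _ _) _; rewrite ger0_norm ?(met_ge0 hm).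
have if1 : P.-integrable setT (EFin \o f1).
  exact: (measurable_bounded_integrable measurableT Pfin mf1 (bounded_by f1 _ bf1)).
have ih : P.-integrable setT (EFin \o h).
  exact: (measurable_bounded_integrable measurableT Pfin mh (bounded_by h _ bh)).
have ik : P.-integrable setT (EFin \o k).
  exact: (measurable_bounded_integrable measurableT Pfin mk (bounded_by k _ bk)).
have SE : forall w, ~ E w -> [/\ ~ S0 w, ~ Sm w, ~ Sp w & ~ SS w].
  move=> w nE; split.
  - by rewrite /S0 /= => e; apply: nE; rewrite /E /= e -g0; exists 0.
  - by move=> [t [It _] e]; apply: nE; exists t.
  - by move=> [t [It _] e]; apply: nE; exists t.
  - by move=> [t [It _] e]; apply: nE; exists t.
have hpt : forall w, k w <= f1 w - h w.
  move=> w; rewrite /k /f1 /h /F !indicE.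
  have [[t It eYw]|nE] := pselect (E w); last first.
    have [n0 nm np nS] := SE w nE.
    by rewrite !memNset //= !mulr0 subr0 addr0 subrr.
  rewrite (mem_set (_ : E w)); last by exists t.
  rewrite (memP_bool _ _ (t == 0)); last first.
    rewrite /S0 /= -eYw -g0; split => [/(geod_inj hm hg It I0) -> //|/eqP -> //].
  rewrite (memP_bool _ _ (t < 0)%R); last first.
    rewrite /Sm /= -eYw; exact: (img_mem d I [set t | t < 0] g t hm hg It).
  rewrite (memP_bool _ _ (0 < t)%R); last first.
    rewrite /Sp /= -eYw; exact: (img_mem d I [set t | 0 < t] g t hm hg It).
  rewrite (memP_bool _ _ ((0 < t) && (t <= L))%R); last first.
    rewrite /SS /= -eYw; apply: (iff_trans (img_mem d I `]0, L] g t hm hg It)).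
    by rewrite /= in_itv.
  rewrite -eYw -g0 (hg t 0 It I0) subr0 g0 (met_sym hm (g t) q) mulr1.
  have := pointwise t tp (d q (g t)) (d q p) (d q m) tp0 (hmin t It) (hfar t It).
  have e0 : t = 0 -> d q (g t) = d q m by move=> ->; rewrite g0.
  move=> /(_ e0); rewrite /L dpm.
  move: (t == 0)%:R ((t < 0)%R)%:R ((0 < t)%R)%:R (((0 < t) && (t <= d q p + tp))%R)%:R.
  move=> b1 b2 b3 b4; lra.
have hae : ((\int[P]_w ((d (Y w) q - d (Y w) m)%:E)) = (\int[P]_w (f1 w)%:E))%E.
  apply: ae_eq_integral => //.
  - exact/measurable_EFinP.
  - exact/measurable_EFinP.
  exists (~` E); split; first exact: measurableC.
    by have := probability_setC P mE; rewrite /E PE subee.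
  by move=> w /= hw Ew; apply: hw => _; rewrite /f1 /F indicE mem_set // mulr1.
have ifh : P.-integrable setT (fun w => (f1 w)%:E - (h w)%:E)%E.
  exact: integrableB.
have hle : ((\int[P]_w (k w)%:E) <= (\int[P]_w ((f1 w)%:E - (h w)%:E)))%E.
  apply: le_integral => // x _; rewrite -EFinB lee_fin; exact: hpt.
have hB : ((\int[P]_w ((f1 w)%:E - (h w)%:E)) =
    (\int[P]_w (f1 w)%:E) - (\int[P]_w (h w)%:E))%E.
  exact: integralB_EFin.
have fP : forall A, measurable A -> (P A)%E \is a fin_num.
  move=> A mA; rewrite ge0_fin_numE ?measure_ge0 //.
  by apply: (le_lt_trans (probability_le1 P mA)); rewrite ltry.
have iI : forall (c : R) A, measurable A ->
    P.-integrable setT (fun w => c%:E * (\1_A w)%:E)%E.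
  by move=> c A mA; apply: (integrableZl measurableT); exact: (integrable_indic P mA).
have hk : ((\int[P]_w (k w)%:E) = (d q m * fine (P S0) + d p m * (fine (P Sm) - fine (P Sp)))%:E)%E.
  rewrite (_ : (fun w => (k w)%:E) = (fun w => ((d q m)%:E * (\1_S0 w)%:E +
     (d p m)%:E * (\1_Sm w)%:E) - (d p m)%:E * (\1_Sp w)%:E)%E); last first.
    by apply/funext => x; rewrite /k -!EFinM -EFinD.
  rewrite integralB //; last exact: iI.
    rewrite integralD //; try exact: iI.
    rewrite !integralZl //; try exact: integrable_indic.
    rewrite !integral_indic // !setIT.
    have key : forall (a b : R) (u v z : \bar R), u \is a fin_num -> v \is a fin_num ->
        z \is a fin_num ->
        (a%:E * u + b%:E * v - b%:E * z)%E = (a * fine u + b * (fine v - fine z))%:E.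
      move=> a b [u| |] [v| |] [z| |] //= _ _ _.
      by rewrite -!EFinM -EFinD mulrBr addrA.
    by apply: key; apply: fP.
  by apply: integrableD => //; exact: iI.
rewrite hae.
move: hle; rewrite hB hk.
have := integrable_fin_num measurableT if1; have := integrable_fin_num measurableT ih.
move: (\int[P]_w (f1 w)%:E)%E (\int[P]_w (h w)%:E)%E.
move=> [x| |] [y| |] //= _ _.
rewrite -EFinB -EFinD !lee_fin /h.
move=> hh; apply: (le_trans (_ : _ <= (x - y) + y)); last by rewrite subrK.
exact: lerD hh (lexx y).
Qed.
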